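(* Under the standing setup, there exists a polynomial $p_4(x)$ such that for all sufficiently large $n$ and all $1\le j\le 2\ell$, $$\mu\otimes\mu\bigl(Q^j_{n,k}\bigr)\le p_4(n)^{k/n}e^{-2n(h(\mu)-\delta)}\gamma^{2\ell-j}.$$
   Context: Standing setup. $\mathcal{A}$ is a finite alphabet, $X\subset\mathcal{A}^{\mathbb{Z}}$ a non-trivial topologically mixing SFT with left shift $\sigma$, $f:X\to\mathbb{R}$ H\''older continuous with pressure $P=P_X(f)$, and $\mu$ the Gibbs measure (unique equilibrium state) of $f$, with entropy $h(\mu)$. $B_m(X)$ is the set of words of length $m$ in $X$; $[w]=\{x\in X:x_0\dots x_{|w|-1}=w\}$, $\mu(w)=\mu([w])$, and $\mu\otimes\mu(S)=\sum_{(u,v)\in S}\mu(u)\mu(v)$. Words are written $u=u_1\dots u_k$, $u_i^j=u_i\dots u_j$. $K>1$ is a constant such that: (i) for all $m\ge1$, $x\in X$: $K^{-1}\le\mu(x_0\dots x_{m-1})/\exp(-Pm+\sum_{i=0}^{m-1}f(\sigma^ix))\le K$; (ii) $\mu(uv)\le K\mu(u)\mu(v)$ and $\mu(\sigma^{-|u|}[v]\mid[u])\le K\mu(v)$ whenever $uv\in B(X)$. $\gamma_0=\inf\{\gamma>0:\exists n_0\ \forall m\ge n_0\ \forall u\in B_m(X),\ \mu(u)\le\gamma^m\}$. Parameters: $\alpha\in(\gamma_0,1]$; $\gamma\in(\gamma_0,\alpha)$; $n_0$ such that $\mu(u)\le\gamma^{|u|}$ for all $u\in B(X)$ with $|u|\ge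 n_0$; $n\ge n_0$; $0<\delta<\frac14\log(\alpha/\gamma)$; $k=k(n)$ with $n/k\to0$ and $k=o(n^2/\log n)$; $\ell=k-n+1$. For a word $u$ of length $\ge n$, $W_n(u)$ is the set of distinct subwords of $u$ of length $n$. $E_n=\{u\in B_n(X):|-\frac1n\log\mu(u)-h(\mu)|<\delta\}$, $G_{n,k}=\{u\in B_k(X): u_1^n=u_\ell^k\text{ and }u_1^n\in E_n\}$, $Q_{n,k}=\{(u,v)\in G_{n,k}\times G_{n,k}: W_n(u)\cap W_n(v)\neq\emptyset\}$, and $Q^j_{n,k}=\{(u,v)\in Q_{n,k}:|W_n(u)\cup W_n(v)|=j\}$. *)

(* Defs.v *)
From Stdlib Require Import Reals ZArith ClassicalEpsilon.
From mathcomp Require Import all_boot.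
Set Implicit Arguments.
Unset Strict Implicit.
Unset Printing Implicit Defensive.

Local Open Scope R_scope.

Definition shiftn (A : Type) (i : nat) (x : Z -> A) : Z -> A :=
  fun t => x (t + Z.of_nat i)%Z.

Definition wordAt (A : Type) (x : Z -> A) (i : Z) (m : nat) : seq A :=
  mkseq (fun t => x (i + Z.of_nat t)%Z) m.

Definition inSFT (A : eqType) (F : seq (seq A)) (x : Z -> A) : Prop :=
  forall (i : Z) (w : seq A), w \in F -> wordAt x i (size w) <> w.

Definition inB (A : eqType) (F : seq (seq A)) (w : seq A) : Prop :=
  exists x, inSFT F x /\ wordAt x 0 (size w) = w.

Definition topMixing (A : eqType) (F : seq (seq A)) : Prop :=
  forall u v, inB F u -> inB F v ->
    exists N, forall m, (N <= m)%N -> exists w, size w = m /\ inB F (u ++ w ++ v).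

Definition nontrivialSFT (A : eqType) (F : seq (seq A)) : Prop :=
  exists x y, inSFT F x /\ inSFT F y /\ x <> y.

(* Hoelder continuity on X w.r.t. the metric d(x,y) = 2^{-min{|i| : x_i <> y_i}} *)
Definition holderOn (A : eqType) (F : seq (seq A)) (f : (Z -> A) -> R) : Prop :=
  exists C theta, 0 <= C /\ 0 < theta < 1 /\
    forall x y (N : nat), inSFT F x -> inSFT F y ->
      (forall i : Z, (Z.abs i < Z.of_nat N)%Z -> x i = y i) ->
      Rabs (f x - f y) <= C * theta ^ N.

Definition sumR (T : Type) (s : seq T) (g : T -> R) : R :=
  foldr (fun t acc => g t + acc) 0 s.

Fixpoint words (A : finType) (m : nat) : seq (seq A) :=
  match m with
  | O => [:: [::]]
  | S m' => flatten [seq [seq a :: w | w <- words A m'] | a <- enum A]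
  end.

Definition ind (P : Prop) : R :=
  if excluded_middle_informative P then 1 else 0.

Definition birkhoff (A : Type) (f : (Z -> A) -> R) (x : Z -> A) (m : nat) : R :=
  sumR (iota 0 m) (fun i => f (shiftn i x)).

(* A shift-invariant Borel probability measure on X, given by its values on
   cylinders [w] (Kolmogorov consistency + shift invariance + support in X). *)
Definition invMeasureOn (A : finType) (F : seq (seq A)) (mu : seq A -> R) : Prop :=
  (forall w, 0 <= mu w) /\ mu [::] = 1 /\
  (forall w, mu w = sumR (enum A) (fun a => mu (rcons w a))) /\
  (forall w, mu w = sumR (enum A) (fun a => mu (a :: w))) /\
  (forall w, ~ inB F w -> mu w = 0).

Definition gibbsProp (A : finType) (F : seq (seq A)) (f : (Z -> A) -> R)
    (P : R) (mu : seq A -> R) (K : R) : Prop :=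
  forall (m : nat) (x : Z -> A), (1 <= m)%N -> inSFT F x ->
    / K <= mu (wordAt x 0 m) / exp (- P * INR m + birkhoff f x m) <= K.

Definition quasiBernoulli (A : finType) (F : seq (seq A)) (mu : seq A -> R) (K : R) : Prop :=
  forall u v, inB F (u ++ v) ->
    mu (u ++ v) <= K * mu u * mu v /\ mu (u ++ v) / mu u <= K * mu v.

(* Kolmogorov-Sinai entropy of mu, as the limit of H(partition into m-cylinders)/m *)
Definition isEntropy (A : finType) (mu : seq A -> R) (h : R) : Prop :=
  Un_cv (fun m => - (/ INR (S m)) * sumR (words A (S m)) (fun w => mu w * ln (mu w))) h.

Definition gamma0Set (A : finType) (F : seq (seq A)) (mu : seq A -> R) (g : R) : Prop :=
  0 < g /\ exists n0 : nat, forall (m : nat) (u : seq A),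
    (n0 <= m)%N -> size u = m -> inB F u -> mu u <= g ^ m.

Definition isInf (S : R -> Prop) (a : R) : Prop :=
  (forall g, S g -> a <= g) /\ (forall b, (forall g, S g -> b <= g) -> b <= a).

(* W_n(u): the list of length-n subwords of u (with repetitions; distinctness via undup) *)
Definition subwords (A : eqType) (n : nat) (u : seq A) : seq (seq A) :=
  [seq take n (drop i u) | i <- iota 0 (size u - n).+1].

Definition E_set (A : finType) (F : seq (seq A)) (mu : seq A -> R) (h delta : R)
    (n : nat) (w : seq A) : Prop :=
  inB F w /\ size w = n /\ Rabs (- (/ INR n) * ln (mu w) - h) < delta.

(* G_{n,k}; u_1^n = take n u, u_l^k (l = k-n+1) = drop (k-n) u *)
Definition G_set (A : finType) (F : seq (seq A)) (mu : seq A -> R) (h delta : R)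
    (n k : nat) (u : seq A) : Prop :=
  size u = k /\ inB F u /\ take n u = drop (k - n) u /\ E_set F mu h delta n (take n u).

Definition Q_set (A : finType) (F : seq (seq A)) (mu : seq A -> R) (h delta : R)
    (n k j : nat) (u v : seq A) : Prop :=
  G_set F mu h delta n k u /\ G_set F mu h delta n k v /\
  has (fun w => w \in subwords n v) (subwords n u) /\
  size (undup (subwords n u ++ subwords n v)) = j.

Definition muPair (A : finType) (mu : seq A -> R) (k : nat)
    (S : seq A -> seq A -> Prop) : R :=
  sumR (words A k) (fun u => sumR (words A k) (fun v => ind (S u v) * (mu u * mu v))).

(* evaluation of the real polynomial with coefficient list c (constant term first) *)
Definition peval (c : seq R) (x : R) : R := foldr (fun a acc => a + x * acc) 0 c.

(* Main.v *)
Require Import Defs.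
From Stdlib Require Import Reals ZArith Lra Lia ClassicalEpsilon.
From mathcomp Require Import all_boot zify.
Require Import Defs.
Set Implicit Arguments. Unset Strict Implicit.
Local Open Scope R_scope.

Lemma sumR_nil (T : Type) (g : T -> R) : sumR [::] g = 0.
Proof. by []. Qed.
Lemma sumR_cons (T : Type) x (s : seq T) (g : T -> R) : sumR (x :: s) g = g x + sumR s g.
Proof. by []. Qed.
Lemma sumR_cat (T : Type) (s t : seq T) (g : T -> R) : sumR (s ++ t) g = sumR s g + sumR t g.
Proof. elim: s => [|x s IH]; rewrite /sumR /= ?IH; [lra|]. rewrite /sumR in IH. rewrite IH; lra. Qed.
Lemma sumR_map (T U : Type) (f : T -> U) (s : seq T) (g : U -> R) : sumR (map f s) g = sumR s (fun x => g (f x)).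
Proof. elim: s => [|x s IH] //=. rewrite /sumR /=. rewrite /sumR in IH. by rewrite IH. Qed.
Lemma sumR_flatten (T : Type) (ss : seq (seq T)) (g : T -> R) : sumR (flatten ss) g = sumR ss (fun s => sumR s g).
Proof. elim: ss => [|s ss IH] //. by rewrite sumR_cat IH. Qed.
Lemma sumR_eq (T : Type) (s : seq T) (g g' : T -> R) : (forall x, g x = g' x) -> sumR s g = sumR s g'.
Proof. move=> H; elim: s => [|x s IH] //. rewrite !sumR_cons IH H //. Qed.
Lemma sumR_le (T : Type) (s : seq T) (g g' : T -> R) : (forall x, g x <= g' x) -> sumR s g <= sumR s g'.
Proof. move=> H; elim: s => [|x s IH]; first (rewrite /sumR /=; lra). rewrite !sumR_cons. have := H x; lra. Qed.
Lemma sumR_ge0 (T : Type) (s : seq T) (g : T -> R) : (forall x, 0 <= g x) -> 0 <= sumR s g.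
Proof. move=> H; elim: s => [|x s IH]; first (rewrite /sumR /=; lra). rewrite !sumR_cons. have := H x; lra. Qed.
Lemma sumR_scal (T : Type) (s : seq T) (g : T -> R) c : c * sumR s g = sumR s (fun x => c * g x).
Proof. elim: s => [|x s IH]; first (rewrite /sumR /=; lra). rewrite !sumR_cons -IH; lra. Qed.
Lemma sumR_plus (T : Type) (s : seq T) (g g' : T -> R) : sumR s (fun x => g x + g' x) = sumR s g + sumR s g'.
Proof. elim: s => [|x s IH]; first (rewrite /sumR /=; lra). rewrite !sumR_cons IH; lra. Qed.
Lemma sumR_swap (T U : Type) (s : seq T) (t : seq U) (g : T -> U -> R) :
  sumR s (fun x => sumR t (g x)) = sumR t (fun y => sumR s (fun x => g x y)).
Proof.
elim: s => [|x s IH].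
  rewrite sumR_nil. elim: t => [|y t IHt] //; rewrite sumR_cons sumR_nil -IHt; lra.
rewrite sumR_cons IH -sumR_plus. by apply: sumR_eq => y; rewrite sumR_cons.
Qed.
Lemma sumR_const (T : Type) (s : seq T) c : sumR s (fun _ => c) = INR (size s) * c.
Proof. elim: s => [|x s IH]; first (rewrite /sumR /=; lra). rewrite sumR_cons IH; change (size (x :: s)) with (size s).+1; rewrite S_INR; lra. Qed.
Lemma sumR_le_const (T : Type) (s : seq T) (g : T -> R) c : (forall x, g x <= c) -> sumR s g <= INR (size s) * c.
Proof. move=> H; rewrite -sumR_const; exact: sumR_le. Qed.

Lemma ind_T (P : Prop) : P -> ind P = 1.
Proof. move=> p; rewrite /ind; destruct (excluded_middle_informative P) as [a|b]; [reflexivity|exact: False_ind (b p)]. Qed.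
Lemma ind_F (P : Prop) : ~ P -> ind P = 0.
Proof. move=> p; rewrite /ind; destruct (excluded_middle_informative P) as [a|b]; [exact: False_ind (p a)|reflexivity]. Qed.
Lemma ind_01 (P : Prop) : 0 <= ind P <= 1.
Proof. rewrite /ind; destruct (excluded_middle_informative P); simpl; lra. Qed.
Lemma ind_imp (P Q : Prop) : (P -> Q) -> ind P <= ind Q.
Proof.
move=> H; rewrite /ind.
destruct (excluded_middle_informative P) as [p|np]; destruct (excluded_middle_informative Q) as [q|nq]; simpl; try lra.
by case: nq; apply: H.
Qed.
Lemma ind_and (P Q : Prop) : ind (P /\ Q) = ind P * ind Q.
Proof.
rewrite /ind.
destruct (excluded_middle_informative P); destruct (excluded_middle_informative Q);
destruct (excluded_middle_informative (P /\ Q)); simpl; try lra; tauto.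
Qed.

Lemma pow_le1R x n : 0 <= x <= 1 -> x ^ n <= 1.
Proof.
move=> Hx; elim: n => [|n IH] /=; first lra.
have : 0 <= x ^ n by apply: pow_le; lra. nra.
Qed.

Lemma pow_decr x m n : 0 <= x <= 1 -> (m <= n)%N -> x ^ n <= x ^ m.
Proof.
move=> Hx Hmn. rewrite -(subnKC Hmn) pow_add.
have := pow_le1R (n - m) Hx. have : 0 <= x ^ m by apply: pow_le; lra. nra.
Qed.

Lemma sumR_eq_in (T : eqType) (s : seq T) (g g' : T -> R) : (forall x, x \in s -> g x = g' x) -> sumR s g = sumR s g'.
Proof. elim: s => [|x s IH] H //. rewrite !sumR_cons (H x (mem_head _ _)) (IH (fun y Hy => H y (mem_behead (s:=x::s) Hy))) //. Qed.
Lemma sumR_le_in (T : eqType) (s : seq T) (g g' : T -> R) : (forall x, x \in s -> g x <= g' x) -> sumR s g <= sumR s g'.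
Proof.
elim: s => [|x s IH] H; first (rewrite /sumR /=; lra).
rewrite !sumR_cons. have := H x (mem_head _ _). have := IH (fun y Hy => H y (mem_behead (s := x :: s) Hy)). lra.
Qed.

Local Open Scope R_scope.

Lemma words_S (A : finType) m : words A m.+1 = [seq a :: w | a <- enum A, w <- words A m].
Proof. by []. Qed.

Lemma words_size (A : finType) m w : w \in words A m -> size w = m.
Proof.
elim: m w => [|m IH] w /=; first by rewrite inE => /eqP ->.
move/flatten_mapP => [a _] /mapP [w' /IH Hw ->] /=. by rewrite Hw.
Qed.

Lemma words_uniq (A : finType) m : uniq (words A m).
Proof.
elim: m => [|m IH] //. rewrite words_S.
apply: allpairs_uniq => //; first exact: enum_uniq.
by move=> [a w] [b w'] _ _ /= [-> ->].
Qed.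

Lemma words_all (A : finType) m w : size w = m -> w \in words A m.
Proof.
elim: m w => [|m IH] [|a w] //= [Hw]. apply/flatten_mapP; exists a; first by rewrite mem_enum.
apply: map_f; exact: IH.
Qed.

Lemma sumR_allpairs (T U V : Type) (f : T -> U -> V) (s : seq T) (t : seq U) g :
  sumR [seq f x y | x <- s, y <- t] g = sumR s (fun x => sumR t (fun y => g (f x y))).
Proof. rewrite sumR_flatten sumR_map. apply: sumR_eq => x. by rewrite sumR_map. Qed.

Lemma sumR_words_split (A : finType) a b (g : seq A -> R) :
  sumR (words A (a + b)) g = sumR (words A a) (fun x => sumR (words A b) (fun y => g (x ++ y))).
Proof.
elim: a g => [|a IH] g.
  rewrite add0n; change (words A 0) with [:: [::] : seq A]; rewrite sumR_cons sumR_nil Rplus_0_r; by apply: sumR_eq.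
rewrite addSn words_S sumR_allpairs words_S sumR_allpairs.
apply: sumR_eq => c. by rewrite IH.
Qed.

Lemma sumR_uniq_eq (T : eqType) (s : seq T) (y : T) (phi : T -> R) beta :
  uniq s -> (forall x, x \in s -> 0 <= phi x <= beta) -> 0 <= beta ->
  sumR s (fun x => ind (x = y) * phi x) <= beta.
Proof.
elim: s => [|x s IH] Hu Hphi Hb; first by rewrite sumR_nil.
move: Hu; rewrite cons_uniq => /andP [Hx Hu]. rewrite sumR_cons.
case: (eqVneq x y) => [Exy|Nxy].
- subst x. rewrite ind_T //.
  have -> : sumR s (fun x => ind (x = y) * phi x) = 0.
    elim: s Hx {IH Hu Hphi} => [|z s IHs] Hz; first by [].
    rewrite sumR_cons IHs; last by move: Hz; rewrite inE negb_or => /andP [].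
    rewrite ind_F; first lra. move=> E; subst z. by rewrite inE eqxx in Hz.
  have := Hphi y (mem_head _ _). lra.
- rewrite ind_F; last by move=> E; rewrite E eqxx in Nxy.
  have := IH Hu (fun z Hz => Hphi z (mem_behead (s:=x::s) Hz)) Hb. lra.
Qed.

Local Open Scope R_scope.

Lemma sumR_mem_le (T : eqType) (s : seq T) (g : T -> R) x :
  (forall y, 0 <= g y) -> x \in s -> g x <= sumR s g.
Proof.
move=> H; elim: s => [|y s IH] //. rewrite inE sumR_cons => /orP [/eqP ->|Hx].
- have := sumR_ge0 s H; lra.
- have := IH Hx; have := H y; lra.
Qed.

Lemma mu_ge0 (A : finType) (F : seq (seq A)) mu : invMeasureOn F mu -> forall w, 0 <= mu w.
Proof. by case. Qed.

Lemma mu_le1 (A : finType) (F : seq (seq A)) mu : invMeasureOn F mu -> forall w, mu w <= 1.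
Proof.
move=> Hmu; have H0 := mu_ge0 Hmu. case: Hmu => _ [H1 [Hr _]].
elim/last_ind => [|w a IH]; first lra.
have : mu (rcons w a) <= mu w.
  rewrite [X in _ <= X]Hr. apply: (sumR_mem_le (g := fun b => mu (rcons w b))) => //. by rewrite mem_enum.
lra.
Qed.

Lemma sum_words_mu (A : finType) (F : seq (seq A)) mu : invMeasureOn F mu ->
  forall m, sumR (words A m) mu = 1.
Proof.
move=> Hmu; case: (Hmu) => _ [H1 [_ [Hl _]]].
elim => [|m IH]; first by change (words A 0) with [:: [::] : seq A]; rewrite sumR_cons sumR_nil H1; lra.
rewrite words_S sumR_allpairs sumR_swap -IH. apply: sumR_eq => w. by rewrite -Hl.
Qed.

Lemma mu_split (A : finType) (F : seq (seq A)) mu K : invMeasureOn F mu -> 1 < K ->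
  quasiBernoulli F mu K -> forall u v, mu (u ++ v) <= K * mu u * mu v.
Proof.
move=> Hmu HK Hq u v. have H0 := mu_ge0 Hmu.
case: (classic (inB F (u ++ v))) => Hb.
- by case: (Hq u v Hb).
- case: Hmu => _ [_ [_ [_ Hz]]]. rewrite Hz //. have := H0 u; have := H0 v => a b. apply: Rmult_le_pos; [apply: Rmult_le_pos|]; lra.
Qed.

Lemma mu_gamma (A : finType) (F : seq (seq A)) mu gamma n0 : invMeasureOn F mu ->
  0 < gamma < 1 ->
  (forall u : seq A, inB F u -> (n0 <= size u)%N -> mu u <= gamma ^ size u) ->
  forall x, mu x <= gamma ^ size x / gamma ^ n0.
Proof.
move=> Hmu Hg Hn0 x. have H0 := mu_ge0 Hmu. have H1 := mu_le1 Hmu.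
have Hp : 0 < gamma ^ n0 by apply: pow_lt; lra.
case: (leqP n0 (size x)) => Hs.
- case: (classic (inB F x)) => Hb.
  + have := Hn0 x Hb Hs. have : gamma ^ size x <= gamma ^ size x / gamma ^ n0.
      have : gamma ^ n0 <= 1 by apply: pow_le1R; lra.
      have : 0 <= gamma ^ size x by apply: pow_le; lra.
      move=> a b. apply/(Rmult_le_reg_r (gamma ^ n0)) => //. field_simplify; try lra. nra.
    lra.
  + case: Hmu => _ [_ [_ [_ Hz]]]. rewrite Hz //. apply: Rmult_le_pos; [apply: pow_le; lra|apply: Rlt_le; apply: Rinv_0_lt_compat; lra].
- have : 1 <= gamma ^ size x / gamma ^ n0.
    apply/(Rmult_le_reg_r (gamma ^ n0)) => //. field_simplify; try lra.
    rewrite -(subnK (ltnW Hs)) pow_add.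
    have : gamma ^ (n0 - size x) <= 1 by apply: pow_le1R; lra.
    have : 0 <= gamma ^ size x by apply: pow_le; lra. nra.
  have := H1 x; lra.
Qed.

Lemma mu_E (A : finType) (F : seq (seq A)) mu h delta n x : invMeasureOn F mu -> (1 <= n)%N ->
  E_set F mu h delta n x -> mu x <= exp (- INR n * (h - delta)).
Proof.
move=> Hmu Hn [_ [_ Hab]]. have H0 := mu_ge0 Hmu x.
have Hn' : 0 < INR n by apply: lt_0_INR; apply/ltP.
case: (Rle_lt_or_eq_dec 0 (mu x) H0) => Hpos; last by rewrite -Hpos; apply: Rlt_le; apply: exp_pos.
rewrite -(exp_ln (mu x)) //. apply: Rlt_le; apply: exp_increasing.
have := Rabs_def2 _ _ Hab => [[a b]].
have : - (INR n) * (- / INR n * ln (mu x)) = ln (mu x) by field; lra.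
nra.
Qed.

Local Open Scope R_scope.

Record piece (A : Type) := Piece { pL : nat; pC : seq A -> seq A -> Prop; pB : R }.

Fixpoint tot (A : Type) (s : seq (piece A)) : nat := if s is p :: s' then (tot s' + pL p)%N else 0%N.
Fixpoint sat (A : Type) (s : seq (piece A)) (v : seq A) : Prop :=
  if s is p :: s' then sat s' (take (tot s') v) /\ pC p (take (tot s') v) (drop (tot s') v) else True.
Fixpoint pm (A : Type) (mu : seq A -> R) (s : seq (piece A)) (v : seq A) : R :=
  if s is p :: s' then pm mu s' (take (tot s') v) * mu (drop (tot s') v) else 1.
Fixpoint pbeta (A : Type) (s : seq (piece A)) : R := if s is p :: s' then pbeta s' * pB p else 1.
Fixpoint goodP (A : finType) (mu : seq A -> R) (s : seq (piece A)) : Prop :=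
  if s is p :: s' then (0 <= pB p /\ forall pre, sumR (words A (pL p)) (fun x => ind (pC p pre x) * mu x) <= pB p) /\ goodP mu s'
  else True.

Lemma pm_ge0 (A : Type) (mu : seq A -> R) s v : (forall w, 0 <= mu w) -> 0 <= pm mu s v.
Proof. move=> H; elim: s v => [|p s IH] v /=; first lra. apply: Rmult_le_pos; [exact: IH|exact: H]. Qed.

Lemma pbeta_ge0 (A : finType) (mu : seq A -> R) s : goodP mu s -> 0 <= pbeta s.
Proof. elim: s => [|p s IH] /=; first lra. move=> [[H1 _] H2]. apply: Rmult_le_pos => //. exact: IH. Qed.

Lemma SEQ (A : finType) (mu : seq A -> R) s : (forall w, 0 <= mu w) -> goodP mu s ->
  sumR (words A (tot s)) (fun v => ind (sat s v) * pm mu s v) <= pbeta s.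
Proof.
move=> H0; elim: s => [|p s IH].
  move=> _; change (words A (tot [::])) with [:: [::] : seq A]. rewrite sumR_cons sumR_nil ind_T //=. lra.
move=> [[Hb Hp] Hg]. change (tot (p :: s)) with (tot s + pL p)%N. rewrite sumR_words_split.
have E : forall pre x, pre \in words A (tot s) -> take (tot s) (pre ++ x) = pre /\ drop (tot s) (pre ++ x) = x.
  move=> pre x /words_size <-. by rewrite take_size_cat // drop_size_cat.
apply: Rle_trans (_ : sumR (words A (tot s)) (fun pre => pB p * (ind (sat s pre) * pm mu s pre)) <= _).
  apply: sumR_le_in => pre Hpre.
  have -> : sumR (words A (pL p)) (fun y => ind (sat (p :: s) (pre ++ y)) * pm mu (p :: s) (pre ++ y))
     = ind (sat s pre) * pm mu s pre * sumR (words A (pL p)) (fun x => ind (pC p pre x) * mu x).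
    rewrite sumR_scal. apply: sumR_eq_in => x _. rewrite /=. case: (E pre x Hpre) => -> ->. rewrite ind_and. ring.
  rewrite (Rmult_comm (pB p)). apply: Rmult_le_compat_l; last exact: Hp.
  apply: Rmult_le_pos; [exact: (proj1 (ind_01 _))|exact: pm_ge0].
rewrite -sumR_scal /=. rewrite (Rmult_comm (pbeta s)). apply: Rmult_le_compat_l => //. exact: IH.
Qed.

Lemma mu_pm (A : finType) (F : seq (seq A)) mu K s v : invMeasureOn F mu -> 1 < K ->
  quasiBernoulli F mu K -> mu v <= K ^ size s * pm mu s v.
Proof.
move=> Hmu HK Hq. have H0 := mu_ge0 Hmu. have H1 := mu_le1 Hmu.
elim: s v => [|p s IH] v /=; first by rewrite Rmult_1_l.
rewrite -{1}(cat_take_drop (tot s) v).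
apply: Rle_trans (mu_split Hmu HK Hq _ _) _.
have := IH (take (tot s) v). have := H0 (drop (tot s) v). have := H0 (take (tot s) v).
have : 0 <= K ^ size s by apply: pow_le; lra.
move=> a b c d.
have : K * mu (take (tot s) v) <= K * (K ^ size s * pm mu s (take (tot s) v)) by apply: Rmult_le_compat_l; lra.
move=> e. 
apply: Rle_trans (_ : K * (K ^ size s * pm mu s (take (tot s) v)) * mu (drop (tot s) v) <= _).
  apply: Rmult_le_compat_r => //.
lra.
Qed.

Local Close Scope R_scope.

Lemma size_undup_rcons (T : eqType) (t : seq T) x :
  size (undup (rcons t x)) = (size (undup t) + (x \notin t))%N.
Proof.
rewrite undup_rcons size_rcons size_filter.
have E := count_predC (pred1 x) (undup t).
have Hc : count (pred1 x) (undup t) = (x \in t) by rewrite count_uniq_mem ?undup_uniq // mem_undup.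
have -> : count (predC1 x) (undup t) = count (predC (pred1 x)) (undup t).
  apply: eq_count => y /=. by rewrite eq_sym.
case: (boolP (x \in t)) Hc E => Hx /= Hc E; lia.
Qed.

Definition repb (T : eqType) (d : T) (S W : seq T) (i : nat) : bool :=
  (nth d W i \in S) || (nth d W i \in take i W).

Lemma nr_count (T : eqType) (d : T) (S W : seq T) :
  (size (undup [seq x <- W | x \notin S]) + count (repb d S W) (iota 0 (size W)))%N = size W.
Proof.
elim/last_ind: W => [|W x IH] //.
rewrite size_rcons -addn1 iotaD count_cat add0n /=.
have -> : count (repb d S (rcons W x)) (iota 0 (size W)) = count (repb d S W) (iota 0 (size W)).
  apply: eq_in_count => i; rewrite mem_iota add0n => /andP [_ Hi].
  by rewrite /repb nth_rcons Hi -cats1 takel_cat // ltnW.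
rewrite /repb nth_rcons ltnn eqxx -cats1 takel_cat // take_size cats1 filter_rcons.
move: IH; rewrite /repb => IH.
case: (boolP (x \in S)) => HxS /=.
- rewrite addn0. lia.
- rewrite size_undup_rcons mem_filter HxS /=. case: (x \in W) => /=; lia.
Qed.

Lemma size_undup_cat (T : eqType) (s1 s2 : seq T) :
  size (undup (s1 ++ s2)) = (size (undup s1) + size (undup [seq x <- s2 | x \notin s1]))%N.
Proof.
have E : s1 ++ s2 =i [seq x <- s2 | x \notin s1] ++ s1.
  move=> y; rewrite !mem_cat mem_filter. by case: (y \in s1); case: (y \in s2).
rewrite (perm_size (perm_undup E)) undup_cat size_cat addnC.
congr (_ + _)%N. congr size. apply/all_filterP.
apply/allP => y. by rewrite mem_undup mem_filter => /andP [].
Qed.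

Local Close Scope R_scope.

Definition gfun (A : Type) (a0 : A) (S : seq (seq A)) (c d : nat) (pre : seq A) : seq A :=
  if (c < size S)%N then take d (nth [::] S c)
  else mkseq (fun t => nth a0 pre ((c - size S) + t %% (size pre - (c - size S)))) d.

Definition Xpiece (A : Type) (a0 : A) (S : seq (seq A)) (gamma : R) (n0 c d : nat) : piece A :=
  @Piece A d (fun pre x => x = gfun a0 S c d pre) (Rdiv (pow gamma d) (pow gamma n0)).
Definition Fpiece (A : Type) (d : nat) : piece A := @Piece A d (fun _ _ => True) R1.

Fixpoint mk (A : Type) (a0 : A) (S : seq (seq A)) (gamma : R) (n0 n : nat) (m Lp : nat) (tau : seq (nat * nat))
  : seq (piece A) :=
  match m with
  | 0 => [::]
  | m'.+1 => let lo := (Lp - n)%N in let oc := head (0, 0)%N tau in let y := (lo + minn oc.1 (Lp - lo))%N in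
     Xpiece a0 S gamma n0 oc.2 (Lp - y) :: Fpiece A (y - lo) :: mk a0 S gamma n0 n m' lo (behead tau)
  end.

Fixpoint Dsum (n : nat) (m Lp : nat) (tau : seq (nat * nat)) : nat :=
  match m with
  | 0 => 0
  | m'.+1 => let lo := (Lp - n)%N in let oc := head (0, 0)%N tau in let y := (lo + minn oc.1 (Lp - lo))%N in
     (Lp - y) + Dsum n m' lo (behead tau)
  end.

Definition cidx (A : eqType) (S W : seq (seq A)) (y : nat) : nat :=
  let w := nth [::] W y in if w \in S then index w S else (size S + index w W)%N.

Fixpoint can (A : eqType) (S : seq (seq A)) (n : nat) (v : seq A) (m Lp : nat) : seq (nat * nat) :=
  match m with
  | 0 => [::]
  | m'.+1 => let lo := (Lp - n)%N in
     let y := (lo + find (repb [::] S (subwords n v)) (iota lo (Lp - lo)))%N in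
     (y - lo, cidx S (subwords n v) y) :: can S n v m' lo
  end.

Lemma tot_mk (A : Type) (a0 : A) S gamma n0 n m Lp tau : (Lp <= m * n)%N ->
  tot (mk a0 S gamma n0 n m Lp tau) = Lp.
Proof.
elim: m Lp tau => [|m IH] Lp tau /=; first by rewrite mul0n leqn0 => /eqP.
move=> HL. rewrite IH; last by rewrite mulSn in HL; lia.
lia.
Qed.

Lemma size_mk (A : Type) (a0 : A) S gamma n0 n m Lp tau : size (mk a0 S gamma n0 n m Lp tau) = (2 * m)%N.
Proof. elim: m Lp tau => [|m IH] Lp tau //=. rewrite IH. lia. Qed.

Lemma count_find (T : Type) (a : pred T) s : (count a s <= size s - find a s)%N.
Proof. elim: s => [|x s IH] //=. case: (a x) => /=; last lia. rewrite subn0 add1n ltnS. exact: count_size. Qed.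

Lemma subwords_size (A : eqType) n (v : seq A) : size (subwords n v) = (size v - n).+1.
Proof. by rewrite /subwords size_map size_iota. Qed.

Lemma subwords_nth (A : eqType) n (v : seq A) i : (i <= size v - n)%N ->
  nth [::] (subwords n v) i = take n (drop i v).
Proof. move=> Hi. rewrite /subwords (nth_map 0%N) ?size_iota ?nth_iota //; lia. Qed.

Lemma count_Dsum (A : eqType) (S : seq (seq A)) n v m Lp : (Lp <= m * n)%N ->
  (count (repb [::] S (subwords n v)) (iota 0 Lp) <= Dsum n m Lp (can S n v m Lp))%N.
Proof.
elim: m Lp => [|m IH] Lp /=; first by rewrite mul0n leqn0 => /eqP ->.
move=> HL. set lo := (Lp - n)%N.
have Hlo : (lo <= m * n)%N by rewrite /lo; rewrite mulSn in HL; lia.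
have -> : iota 0 Lp = iota 0 lo ++ iota lo (Lp - lo).
  by rewrite -{1}(subnKC (leq_subr n Lp : lo <= Lp)%N) iotaD.
rewrite count_cat. have := IH lo Hlo. have := count_find (repb [::] S (subwords n v)) (iota lo (Lp - lo)).
rewrite size_iota. set f := find _ _. have : (f <= Lp - lo)%N by rewrite /f; have := find_size (repb [::] S (subwords n v)) (iota lo (Lp - lo)); rewrite size_iota.
move=> Hf. rewrite (_ : minn (lo + f - lo) (Lp - lo) = f); last lia. lia.
Qed.

Lemma period (A : Type) (a0 : A) (v : seq A) p y n : (p < y)%N ->
  (forall t, (t < n)%N -> nth a0 v (p + t) = nth a0 v (y + t)) ->
  forall t, (t < n)%N -> nth a0 v (y + t) = nth a0 v (p + t %% (y - p)).
Proof.
move=> Hpy H t. elim: t {-2}t (leqnn t) => [|N IH] t Ht Htn.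
  have -> : t = 0%N by lia. by rewrite mod0n -H //; lia.
case: (ltnP t (y - p)) => Hty.
- rewrite modn_small // -H //.
- rewrite -H //. have -> : (p + t = y + (t - (y - p)))%N by lia.
  rewrite IH; [|lia|lia]. congr nth. congr addn.
  rewrite -{2}(subnK Hty). by rewrite modnDr.
Qed.

Lemma Det (A : eqType) (a0 : A) (S : seq (seq A)) n (v : seq A) y Lp :
  (y <= Lp)%N -> (Lp <= size v - n)%N -> (Lp - y <= n)%N ->
  (y = Lp \/ repb [::] S (subwords n v) y) ->
  drop y (take Lp v) = gfun a0 S (cidx S (subwords n v) y) (Lp - y) (take y v).
Proof.
move=> Hy HL Hd [->|Hr].
  rewrite subnn drop_oversize ?size_take_min; last lia.
  rewrite /gfun. by case: ifP => _; rewrite ?take0.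
set W := subwords n v. set w := nth [::] W y.
have Hw : w = take n (drop y v) by rewrite /w subwords_nth //; lia.
rewrite /cidx -/w /gfun.
have Edrop : drop y (take Lp v) = take (Lp - y) (drop y v).
  by rewrite take_drop subnK.
case: (boolP (w \in S)) => HwS.
- rewrite index_mem HwS nth_index // Hw Edrop take_takel //.
- have HwW : w \in take y W by move: Hr; rewrite /repb -/W -/w (negbTE HwS).
  set p := index w W.
  have Hpy : (p < y)%N.
    rewrite /p -(cat_take_drop y W) index_cat HwW. have := index_mem w (take y W). rewrite HwW size_take_min => Hi. lia.
  have HwW' : w \in W by apply: mem_take HwW.
  have Hp : nth [::] W p = w by rewrite nth_index.
  rewrite (_ : (size S + p < size S)%N = false); last lia.
  rewrite (_ : (size S + p - size S = p)%N); last lia.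
  rewrite size_takel; last lia.
  have Hwin : forall t, (t < n)%N -> nth a0 v (p + t) = nth a0 v (y + t).
    move=> t Ht. have : take n (drop p v) = take n (drop y v).
      by rewrite -Hw -Hp subwords_nth //; lia.
    move/(congr1 (nth a0 ^~ t)). by rewrite !nth_take // !nth_drop.
  apply: (@eq_from_nth _ a0).
    rewrite Edrop size_takel ?size_mkseq //. rewrite size_drop. lia.
  move=> t. rewrite Edrop size_takel; last by rewrite size_drop; lia.
  move=> Ht. rewrite nth_take // nth_drop nth_mkseq // nth_take.
    apply: (@period _ a0 v p y n Hpy Hwin); lia.
  have : (t %% (y - p) < y - p)%N by rewrite ltn_mod; lia.
  lia.
Qed.

Lemma sat_mk (A : eqType) (a0 : A) S gamma n0 n (v : seq A) m Lp :
  (Lp <= m * n)%N -> (Lp <= size v - n)%N ->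
  sat (mk a0 S gamma n0 n m Lp (can S n v m Lp)) (take Lp v).
Proof.
elim: m Lp => [|m IH] Lp HL HLv //=.
set lo := (Lp - n)%N.
set f := find (repb [::] S (subwords n v)) (iota lo (Lp - lo)).
have Hf : (f <= Lp - lo)%N by have := find_size (repb [::] S (subwords n v)) (iota lo (Lp - lo)); rewrite size_iota.
have Hlo : (lo <= m * n)%N by rewrite /lo; rewrite mulSn in HL; lia.
have Emin : (lo + minn (lo + f - lo) (Lp - lo) = lo + f)%N by lia.
rewrite Emin tot_mk //.
have Ey : (lo + (lo + f - lo) = lo + f)%N by lia.
rewrite Ey.
split; first split => //.
  rewrite take_takel; last lia. rewrite take_takel; last lia. apply: IH => //; lia.
rewrite take_takel; last lia.
apply: Det; [lia|lia|lia|].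
case: (ltnP f (Lp - lo)) => Hfl; last by left; lia.
right. have Hh : has (repb [::] S (subwords n v)) (iota lo (Lp - lo)) by rewrite has_find size_iota.
have := nth_find 0%N Hh. by rewrite -/f nth_iota.
Qed.

Definition pairs (n Cm : nat) : seq (nat * nat) := [seq (o, c) | o <- iota 0 n.+1, c <- iota 0 Cm].
Fixpoint tys (n Cm m : nat) : seq (seq (nat * nat)) :=
  match m with 0 => [:: [::]] | m'.+1 => [seq oc :: t | oc <- pairs n Cm, t <- tys n Cm m'] end.

Lemma size_tys n Cm m : size (tys n Cm m) = (((n.+1) * Cm) ^ m)%N.
Proof. elim: m => [|m IH] //=. by rewrite size_allpairs IH /pairs size_allpairs !size_iota expnS. Qed.

Lemma can_tys (A : eqType) (S : seq (seq A)) n (v : seq A) m Lp :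
  can S n v m Lp \in tys n (size S + size v).+2 m.
Proof.
elim: m Lp => [|m IH] Lp; first by rewrite inE.
cbn [can tys].
apply: allpairs_f => //. apply: allpairs_f.
  rewrite mem_iota /=. 
  have := find_size (repb [::] S (subwords n v)) (iota (Lp - n) (Lp - (Lp - n))); rewrite size_iota. lia.
rewrite mem_iota leq0n add0n /= /cidx. 
set w := nth [::] (subwords n v) _. case: ifP => H.
  have Hi : (index w S < size S)%N by rewrite index_mem H.
  lia.
have := index_size w (subwords n v).
rewrite subwords_size. lia.
Qed.


Local Open Scope R_scope.

Definition Epiece (A : finType) (F : seq (seq A)) mu h delta n : piece A :=
  @Piece A n (fun pre x => x = take n pre /\ E_set F mu h delta n x) (exp (- INR n * (h - delta))).

Lemma pbeta_mk (A : Type) (a0 : A) S gamma n0 n m Lp tau : 0 < gamma ->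
  pbeta (mk a0 S gamma n0 n m Lp tau) = gamma ^ Dsum n m Lp tau / gamma ^ (n0 * m).
Proof.
move=> Hg. elim: m Lp tau => [|m IH] Lp tau.
  rewrite muln0 /=. field.
cbn [mk Dsum pbeta]. rewrite IH /=. rewrite pow_add mulnS pow_add.
have : 0 < gamma ^ n0 by apply: pow_lt.
have : 0 < gamma ^ (n0 * m) by apply: pow_lt.
move=> a b. field. lra.
Qed.

Lemma goodP_mk (A : finType) (a0 : A) (F : seq (seq A)) mu S gamma n0 n m Lp tau :
  invMeasureOn F mu -> 0 < gamma < 1 ->
  (forall u : seq A, inB F u -> (n0 <= size u)%N -> mu u <= gamma ^ size u) ->
  goodP mu (mk a0 S gamma n0 n m Lp tau).
Proof.
move=> Hmu Hg Hn0. have H0 := mu_ge0 Hmu.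
have Hpos : forall d, 0 <= gamma ^ d / gamma ^ n0.
  move=> d. apply: Rmult_le_pos; [apply: pow_le; lra|apply: Rlt_le; apply: Rinv_0_lt_compat; apply: pow_lt; lra].
elim: m Lp tau => [|m IH] Lp tau //=.
split; last split; last exact: IH.
- split; first exact: Hpos.
  move=> pre. apply: sumR_uniq_eq; [exact: words_uniq| |exact: Hpos].
  move=> x /words_size Hx. split; first exact: H0. rewrite -Hx. exact: (mu_gamma Hmu Hg Hn0).
- split; first lra. move=> pre.
  rewrite (@sumR_eq _ _ _ mu); first by rewrite (sum_words_mu Hmu); lra.
  move=> x; rewrite ind_T //; lra.
Qed.

Lemma goodP_E (A : finType) (F : seq (seq A)) mu h delta n :
  invMeasureOn F mu -> (1 <= n)%N ->
  0 <= exp (- INR n * (h - delta)) /\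
  forall pre, sumR (words A n) (fun x => ind (x = take n pre /\ E_set F mu h delta n x) * mu x) <= exp (- INR n * (h - delta)).
Proof.
move=> Hmu Hn. have H0 := mu_ge0 Hmu. have He : 0 <= exp (- INR n * (h - delta)) by apply: Rlt_le; apply: exp_pos.
split => // pre.
rewrite (@sumR_eq _ _ _ (fun x => ind (x = take n pre) * (ind (E_set F mu h delta n x) * mu x))); last first.
  move=> x; rewrite ind_and; ring.
apply: sumR_uniq_eq => //; first exact: words_uniq.
move=> x _. case: (classic (E_set F mu h delta n x)) => HE.
- rewrite ind_T // Rmult_1_l. split; first exact: H0. exact: mu_E HE.
- rewrite ind_F // Rmult_0_l; lra.
Qed.

Definition Spec (A : finType) (a0 : A) F mu h delta (S : seq (seq A)) gamma n0 n m M tau : seq (piece A) :=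
  Epiece F mu h delta n :: mk a0 S gamma n0 n m M tau.

Lemma Core (A : finType) (a0 : A) (F : seq (seq A)) mu K gamma n0 h delta n k m (S : seq (seq A)) a :
  invMeasureOn F mu -> 1 < K -> quasiBernoulli F mu K -> 0 < gamma < 1 ->
  (forall u : seq A, inB F u -> (n0 <= size u)%N -> mu u <= gamma ^ size u) ->
  (1 <= n)%N -> (2 * n <= k)%N -> (k - n <= m * n)%N ->
  sumR (words A k) (fun v => ind (G_set F mu h delta n k v /\ size (undup [seq x <- subwords n v | x \notin S]) = a) * mu v)
  <= INR (((n.+1) * (size S + k).+2) ^ m)%N *
     (K ^ (2 * m + 1) * (gamma ^ (k - n + 1 - a) / (gamma * gamma ^ (n0 * m))) * exp (- INR n * (h - delta))).
Proof.
move=> Hmu HK Hq Hg Hn0 Hn Hk Hm.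
have H0 := mu_ge0 Hmu.
set M := (k - n)%N. set Cm := (size S + k).+2.
set T := tys n Cm m.
pose SP := fun tau => Spec a0 F mu h delta S gamma n0 n m M tau.
pose cond := fun tau => (M + 1 - a <= 1 + Dsum n m M tau)%N.
have HtotSP : forall tau, tot (SP tau) = k.
  move=> tau. rewrite /SP /Spec /= tot_mk //. rewrite /M. lia.
apply: Rle_trans (_ : sumR (words A k) (fun v => sumR T (fun tau => ind (sat (SP tau) v) * (ind (cond tau) * mu v))) <= _).
  apply: sumR_le_in => v Hv.
  have Hsv : size v = k by apply: words_size.
  case: (classic (G_set F mu h delta n k v /\ size (undup [seq x <- subwords n v | x \notin S]) = a)) => HG; last first.
    rewrite ind_F // Rmult_0_l. apply: sumR_ge0 => tau.
    apply: Rmult_le_pos; first exact: (proj1 (ind_01 _)). apply: Rmult_le_pos; [exact: (proj1 (ind_01 _))|exact: H0].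
  rewrite ind_T // Rmult_1_l.
  case: HG => [[_ [_ [Htk HE]]] Ha].
  set tau0 := can S n v m M.
  have Htau0 : tau0 \in T by rewrite /T /Cm -Hsv; exact: can_tys.
  have Hsat : sat (SP tau0) v.
    rewrite /SP /Spec /=. rewrite tot_mk //. split.
      apply: sat_mk => //. rewrite Hsv /M. lia.
    rewrite take_takel; last by rewrite /M; lia. rewrite /M -Htk. split => //.
  have Hcond : cond tau0.
    rewrite /cond. have := nr_count [::] S (subwords n v). rewrite subwords_size Hsv Ha.
    have Hc' := @count_Dsum _ S n v m M Hm.
    have -> : ((k - n).+1 = M + 1)%N by rewrite /M; lia.
    rewrite iotaD count_cat /= add0n.
    rewrite /tau0 /M in Hc' *. move: Hc'. set D := Dsum _ _ _ _. set c := count _ (iota 0 (k - n)). case: (repb _ _ _ _) => /=; lia.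
  apply: Rle_trans (_ : ind (sat (SP tau0) v) * (ind (cond tau0) * mu v) <= _).
    rewrite !ind_T //; lra.
  apply: (sumR_mem_le (g := fun tau => ind (sat (SP tau) v) * (ind (cond tau) * mu v))) => //.
  move=> tau. apply: Rmult_le_pos; first exact: (proj1 (ind_01 _)). apply: Rmult_le_pos; [exact: (proj1 (ind_01 _))|exact: H0].
rewrite sumR_swap.
set C := K ^ (2 * m + 1) * (gamma ^ (k - n + 1 - a) / (gamma * gamma ^ (n0 * m))) * exp (- INR n * (h - delta)).
have -> : (((n.+1) * (size S + k).+2) ^ m)%N = size T by rewrite /T size_tys.
apply: sumR_le_const => tau.
have HKp : 0 <= K ^ (2 * m + 1) by apply: pow_le; lra.
have Hgp : 0 < gamma ^ (n0 * m) by apply: pow_lt; lra.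
have He : 0 < exp (- INR n * (h - delta)) by apply: exp_pos.
have Hgood : goodP mu (SP tau).
  rewrite /SP /Spec /=. split; first exact: goodP_E. apply: goodP_mk; [exact: Hmu|exact: Hg|exact: Hn0].
have HS := SEQ H0 Hgood. rewrite HtotSP in HS.
have Hsz : size (SP tau) = (2 * m + 1)%N by rewrite /SP /Spec /= size_mk; lia.
have Hpb : pbeta (SP tau) = gamma ^ Dsum n m M tau / gamma ^ (n0 * m) * exp (- INR n * (h - delta)).
  rewrite /SP /Spec /= pbeta_mk //; lra.
apply: Rle_trans (_ : ind (cond tau) * (K ^ (2 * m + 1) * pbeta (SP tau)) <= _).
  rewrite (@sumR_eq _ _ _ (fun v => ind (cond tau) * (ind (sat (SP tau) v) * mu v))); last by move=> v; ring.
  rewrite -sumR_scal. apply: Rmult_le_compat_l; first exact: (proj1 (ind_01 _)).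
  apply: Rle_trans (_ : sumR (words A k) (fun v => K ^ (2 * m + 1) * (ind (sat (SP tau) v) * pm mu (SP tau) v)) <= _).
    apply: sumR_le => v. have := mu_pm (SP tau) v Hmu HK Hq. rewrite Hsz => Hv.
    have := ind_01 (sat (SP tau) v). have := pm_ge0 (SP tau) v H0. have := H0 v. nra.
  rewrite -sumR_scal. by apply: Rmult_le_compat_l.
rewrite Hpb /C.
case: (boolP (cond tau)) => Hc.
- rewrite ind_T //.
  have HD : gamma ^ Dsum n m M tau <= gamma ^ (k - n + 1 - a) / gamma.
    have : gamma ^ (Dsum n m M tau).+1 <= gamma ^ (k - n + 1 - a).
      apply: pow_decr; first lra. move: Hc; rewrite /cond /M. lia.
    rewrite /= => Hle. apply/(Rmult_le_reg_r gamma); first lra. field_simplify; lra.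
  have -> : gamma ^ (k - n + 1 - a) / (gamma * gamma ^ (n0 * m)) = (gamma ^ (k - n + 1 - a) / gamma) / gamma ^ (n0 * m).
    field; lra.
  rewrite Rmult_1_l -Rmult_assoc. apply: Rmult_le_compat_r; first lra. apply: Rmult_le_compat_l => //.
  apply: Rmult_le_compat_r => //. apply: Rlt_le; exact: Rinv_0_lt_compat.
- rewrite ind_F; last by move/negP: Hc.
  rewrite Rmult_0_l. apply: Rmult_le_pos; last lra. apply: Rmult_le_pos => //.
  apply: Rmult_le_pos; first (apply: pow_le; lra). apply: Rlt_le; apply: Rinv_0_lt_compat. apply: Rmult_lt_0_compat; lra.
Qed.

Local Open Scope R_scope.

Lemma filter_nil_id (T : eqType) (s : seq T) : [seq x <- s | x \notin [::]] = s.
Proof. by rewrite (eq_filter (a2 := predT)) ?filter_predT. Qed.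

Lemma INR_expn (a m : nat) : INR (a ^ m)%N = INR a ^ m.
Proof. elim: m => [|m IH] //=. by rewrite expnS -multE mult_INR IH. Qed.

Lemma CoreU (A : finType) (a0 : A) (F : seq (seq A)) mu K gamma n0 h delta n k m (S : seq (seq A)) a :
  invMeasureOn F mu -> 1 < K -> quasiBernoulli F mu K -> 0 < gamma < 1 ->
  (forall u : seq A, inB F u -> (n0 <= size u)%N -> mu u <= gamma ^ size u) ->
  (1 <= n)%N -> (2 * n <= k)%N -> (k - n <= m * n)%N -> (size S <= k.+1)%N ->
  sumR (words A k) (fun v => ind (G_set F mu h delta n k v /\ size (undup [seq x <- subwords n v | x \notin S]) = a) * mu v)
  <= INR ((n.+1) * (k + k).+3) ^ m *
     (K ^ (2 * m + 1) * (gamma ^ (k - n + 1 - a) / (gamma * gamma ^ (n0 * m))) * exp (- INR n * (h - delta))).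
Proof.
move=> Hmu HK Hq Hg Hn0 Hn Hk Hm HS.
apply: Rle_trans (@Core _ a0 F mu K gamma n0 h delta n k m S a Hmu HK Hq Hg Hn0 Hn Hk Hm) _.
apply: Rmult_le_compat_r.
  apply: Rmult_le_pos; last (apply: Rlt_le; apply: exp_pos).
  apply: Rmult_le_pos; first (apply: pow_le; lra).
  apply: Rmult_le_pos; first (apply: pow_le; lra). apply: Rlt_le; apply: Rinv_0_lt_compat.
  apply: Rmult_lt_0_compat; first lra. apply: pow_lt; lra.
rewrite INR_expn. apply: pow_incr. split; first exact: pos_INR. apply: le_INR. apply/leP. apply: leq_mul => //. lia.
Qed.

Lemma PairBound (A : finType) (a0 : A) (F : seq (seq A)) mu K gamma n0 h delta n k m j :
  invMeasureOn F mu -> 1 < K -> quasiBernoulli F mu K -> 0 < gamma < 1 ->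
  (forall u : seq A, inB F u -> (n0 <= size u)%N -> mu u <= gamma ^ size u) ->
  (1 <= n)%N -> (2 * n <= k)%N -> (k - n <= m * n)%N ->
  muPair mu k (Q_set F mu h delta n k j)
  <= INR j.+1 * (INR ((n.+1) * (k + k).+3) ^ m * K ^ (2 * m + 1) / (gamma * gamma ^ (n0 * m))) ^ 2
     * exp (- 2 * INR n * (h - delta)) * gamma ^ (2 * (k - n + 1) - j).
Proof.
move=> Hmu HK Hq Hg Hn0 Hn Hk Hm.
have H0 := mu_ge0 Hmu.
set Cb := INR ((n.+1) * (k + k).+3) ^ m.
set e := exp (- INR n * (h - delta)).
pose Bf := fun a => Cb * (K ^ (2 * m + 1) * (gamma ^ (k - n + 1 - a) / (gamma * gamma ^ (n0 * m))) * e).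
pose Gs := fun (S : seq (seq A)) a (v : seq A) => G_set F mu h delta n k v /\ size (undup [seq x <- subwords n v | x \notin S]) = a.
pose I := iota 0 j.+1.
have Hind : forall x, 0 <= ind x by move=> x; exact: (proj1 (ind_01 _)).
rewrite /muPair.
apply: Rle_trans (_ : sumR (words A k) (fun u => sumR I (fun a => ind (Gs [::] a u) * mu u *
          sumR (words A k) (fun v => ind (Gs (subwords n u) (j - a)%N v) * mu v))) <= _).
  apply: sumR_le => u.
  rewrite (@sumR_eq _ _ _ (fun a => sumR (words A k) (fun v => ind (Gs [::] a u) * ind (Gs (subwords n u) (j - a)%N v) * (mu u * mu v)))); last first.
    move=> a. rewrite sumR_scal. apply: sumR_eq => v. ring.
  rewrite -sumR_swap. apply: sumR_le => v.
  case: (classic (Q_set F mu h delta n k j u v)) => HQ; last first.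
    rewrite ind_F // Rmult_0_l. apply: sumR_ge0 => a. apply: Rmult_le_pos; last (apply: Rmult_le_pos; exact: H0).
    apply: Rmult_le_pos; exact: Hind.
  rewrite ind_T //.
  case: HQ => [Gu [Gv [_ Hj]]].
  set au := size (undup [seq x <- subwords n u | x \notin [::]]).
  have Hj' : (au + size (undup [seq x <- subwords n v | x \notin subwords n u]) = j)%N.
    by rewrite /au filter_nil_id -size_undup_cat.
  have Hau : au \in I by rewrite /I mem_iota; lia.
  apply: Rle_trans (_ : ind (Gs [::] au u) * ind (Gs (subwords n u) (j - au)%N v) * (mu u * mu v) <= _).
    rewrite !ind_T //; first lra.
      split => //. lia.
  apply: (sumR_mem_le (g := fun a => ind (Gs [::] a u) * ind (Gs (subwords n u) (j - a)%N v) * (mu u * mu v))) => //.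
  move=> a. apply: Rmult_le_pos; last (apply: Rmult_le_pos; exact: H0). apply: Rmult_le_pos; exact: Hind.
have HBpos : forall a, 0 <= Bf a.
  move=> a. rewrite /Bf. apply: Rmult_le_pos; first (apply: pow_le; apply: pos_INR).
  apply: Rmult_le_pos; last (apply: Rlt_le; apply: exp_pos).
  apply: Rmult_le_pos; first (apply: pow_le; lra).
  apply: Rmult_le_pos; first (apply: pow_le; lra). apply: Rlt_le; apply: Rinv_0_lt_compat.
  apply: Rmult_lt_0_compat; first lra. apply: pow_lt; lra.
apply: Rle_trans (_ : sumR (words A k) (fun u => sumR I (fun a => ind (Gs [::] a u) * mu u * Bf (j - a)%N)) <= _).
  apply: sumR_le_in => u Hu. apply: sumR_le => a.
  apply: Rmult_le_compat_l; first (apply: Rmult_le_pos; [exact: Hind|exact: H0]).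
  apply: (@CoreU _ a0 F mu K gamma n0 h delta n k m (subwords n u) (j - a)%N) => //.
  rewrite subwords_size (words_size Hu). lia.
rewrite sumR_swap.
apply: Rle_trans (_ : sumR I (fun a => Bf (j - a)%N * Bf a) <= _).
  apply: sumR_le => a.
  rewrite (@sumR_eq _ _ _ (fun u => Bf (j - a)%N * (ind (Gs [::] a u) * mu u))); last by move=> u; ring.
  rewrite -sumR_scal. apply: Rmult_le_compat_l => //.
  exact: (@CoreU _ a0 F mu K gamma n0 h delta n k m [::] a).
have -> : INR j.+1 = INR (size I) by rewrite /I size_iota.
rewrite Rmult_assoc Rmult_assoc -sumR_const. apply: sumR_le_in => a. rewrite /I mem_iota add0n => /andP [_ Ha].
have Hgp : 0 < gamma ^ (n0 * m) by apply: pow_lt; lra.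
have Hpow : gamma ^ (k - n + 1 - (j - a)) * gamma ^ (k - n + 1 - a) <= gamma ^ (2 * (k - n + 1) - j).
  rewrite -pow_add. apply: pow_decr; first lra. lia.
have Hexp : exp (- 2 * INR n * (h - delta)) = e * e by rewrite /e -exp_plus; congr exp; ring.
rewrite Hexp /Bf.
set c := Cb * K ^ (2 * m + 1) / (gamma * gamma ^ (n0 * m)).
have Hc : 0 <= c.
  rewrite /c. apply: Rmult_le_pos; last (apply: Rlt_le; apply: Rinv_0_lt_compat; apply: Rmult_lt_0_compat; lra).
  apply: Rmult_le_pos; [apply: pow_le; apply: pos_INR|apply: pow_le; lra].
have -> : Cb * (K ^ (2 * m + 1) * (gamma ^ (k - n + 1 - (j - a)) / (gamma * gamma ^ (n0 * m))) * e) *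
  (Cb * (K ^ (2 * m + 1) * (gamma ^ (k - n + 1 - a) / (gamma * gamma ^ (n0 * m))) * e))
  = c ^ 2 * (e * e) * (gamma ^ (k - n + 1 - (j - a)) * gamma ^ (k - n + 1 - a)).
  rewrite /c. field. split; lra.
have He : 0 <= e * e by apply: Rmult_le_pos; apply: Rlt_le; apply: exp_pos.
have Hce : 0 <= c ^ 2 * (e * e) by apply: Rmult_le_pos => //; apply: pow_le.
move: Hpow Hce. set X := gamma ^ (k - n + 1 - (j - a)). set Y := gamma ^ (k - n + 1 - a). set Z := gamma ^ _. set W := c ^ 2 * (e * e). move=> Hp Hw. have H := Rmult_le_compat_l _ _ _ Hw Hp. rewrite /W in H *. lra.
Qed.

Local Open Scope R_scope.

Lemma peval_mono d c x : peval (nseq d 0 ++ [:: c]) x = x ^ d * c.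
Proof. elim: d => [|d IH] /=; rewrite /peval /=; first ring. rewrite /peval in IH. rewrite IH. ring. Qed.

Lemma pow_ge1 x d : 1 <= x -> 1 <= x ^ d.
Proof. move=> Hx. have := Rle_pow x 0 d Hx (Nat.le_0_l d). by rewrite pow_O. Qed.

Lemma Numeric K gamma n0 n k j :
  1 < K -> 0 < gamma < 1 -> (1 <= n)%N -> (2 * n < k)%N -> (k <= n * n)%N -> (j <= 2 * (k - n + 1))%N ->
  let m := (k %/ n).+1 in
  let c := (10 * K ^ 4 * (/ gamma) ^ (2 * n0 + 2)) ^ 11 in
  INR j.+1 * (INR ((n.+1) * (k + k).+3) ^ m * K ^ (2 * m + 1) / (gamma * gamma ^ (n0 * m))) ^ 2
  <= Rpower (INR n ^ 33 * c) (INR k / INR n).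
Proof.
move=> HK Hg Hn Hk Hkn Hj m c.
set g := / gamma.
have Hg1 : 1 <= g by rewrite /g -Rinv_1; apply: Rinv_le_contravar; lra.
have Hn1 : 1 <= INR n by apply: (le_INR 1); apply/leP.
set V := K ^ 4 * g ^ (2 * n0 + 2).
have HV : 1 <= V.
  rewrite /V. have := pow_ge1 4 (Rlt_le _ _ HK). have := pow_ge1 (2 * n0 + 2) Hg1. nra.
set Y := 10 * INR n ^ 3 * V.
have Hn3 : 1 <= INR n ^ 3 by apply: pow_ge1.
have HY : 1 <= Y by rewrite /Y; nra.
have HYV : V <= Y by rewrite /Y; nra.
have Hz : INR ((n.+1) * (k + k).+3) <= Y.
  apply: Rle_trans (_ : 10 * INR n ^ 3 <= _); last by rewrite /Y; nra.
  have -> : 10 * INR n ^ 3 = INR (10 * n * n * n) by rewrite !mult_INR /=; ring.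
  apply: le_INR. apply/leP. 
  have : (n.+1 <= 2 * n)%N by lia.
  have : ((k + k).+3 <= 5 * (n * n))%N by nia.
  nia.
have Hj1 : INR j.+1 <= Y.
  apply: Rle_trans (_ : 10 * INR n ^ 3 <= _); last by rewrite /Y; nra.
  have -> : 10 * INR n ^ 3 = INR (10 * n * n * n) by rewrite !mult_INR /=; ring.
  apply: le_INR. apply/leP. nia.
have Hgp : 0 < gamma ^ (n0 * m) by apply: pow_lt; lra.
have E1 : INR ((n.+1) * (k + k).+3) ^ m * K ^ (2 * m + 1) / (gamma * gamma ^ (n0 * m))
   = INR ((n.+1) * (k + k).+3) ^ m * (K ^ (2 * m + 1) * g ^ (n0 * m + 1)).
  rewrite /g pow_inv (addn1 (n0 * m)) -tech_pow_Rmult. field. split; lra.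
rewrite E1.
have HKg : (K ^ (2 * m + 1) * g ^ (n0 * m + 1)) ^ 2 <= Y ^ (m + 1).
  apply: Rle_trans (_ : V ^ (m + 1) <= _); last by apply: pow_incr; lra.
  rewrite /V (Rpow_mult_distr (K ^ (2 * m + 1))) (Rpow_mult_distr (K ^ 4)).
  rewrite -(pow_mult K) -(pow_mult g) -(pow_mult K 4) -(pow_mult g (2 * n0 + 2)).
  have HK1 : K ^ ((2 * m + 1) * 2) <= K ^ (4 * (m + 1)) by apply: Rle_pow; [lra|apply/leP; lia].
  have Hg2 : g ^ ((n0 * m + 1) * 2) <= g ^ ((2 * n0 + 2) * (m + 1)) by apply: Rle_pow; [lra|apply/leP; nia].
  apply: Rmult_le_compat; [apply: pow_le; lra|apply: pow_le; lra|exact: HK1|exact: Hg2].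
have Hzm : (INR ((n.+1) * (k + k).+3) ^ m) ^ 2 <= Y ^ (2 * m).
  rewrite -pow_mult. have -> : (m * 2)%coq_nat = (2 * m)%N by rewrite multE mulnC.
  apply: pow_incr. split; [exact: pos_INR|exact: Hz].
have Hstep : INR j.+1 * (INR ((n.+1) * (k + k).+3) ^ m * (K ^ (2 * m + 1) * g ^ (n0 * m + 1))) ^ 2 <= Y ^ (3 * m + 2).
  rewrite Rpow_mult_distr.
  have -> : (3 * m + 2 = 1 + (2 * m + (m + 1)))%N by lia.
  rewrite (pow_add Y 1) (pow_add Y (2 * m)) pow_1.
  apply: Rmult_le_compat; [exact: pos_INR| |exact: Hj1|].
    apply: Rmult_le_pos; apply: pow2_ge_0.
  apply: Rmult_le_compat; [apply: pow2_ge_0|apply: pow2_ge_0|exact: Hzm|exact: HKg].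
apply: Rle_trans Hstep _.
have HY0 : 0 < Y by lra.
rewrite -Rpower_pow //.
have -> : INR n ^ 33 * c = Rpower Y (INR 11).
  rewrite Rpower_pow // /Y /c /V. rewrite !Rpow_mult_distr -pow_mult. ring.
rewrite Rpower_mult. apply: Rle_Rpower => //.
have Hnp : 0 < INR n by lra.
have Hdiv : INR (k %/ n) <= INR k / INR n.
  apply/(Rmult_le_reg_r (INR n)) => //. field_simplify; last lra.
  rewrite -mult_INR. apply: le_INR. apply/leP. rewrite multE. exact: leq_trunc_div.
have Hk2 : 2 <= INR k / INR n.
  apply/(Rmult_le_reg_r (INR n)) => //. field_simplify; last lra.
  have -> : 2 * INR n = INR (2 * n) by rewrite -multE mult_INR.
  apply: le_INR. apply/leP. lia.
rewrite /m. have -> : INR (3 * (k %/ n).+1 + 2) = 3 * INR (k %/ n) + 5.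
  rewrite -plusE -multE plus_INR mult_INR (S_INR (k %/ n)). have -> : INR 3 = 3 by rewrite /=; ring. have -> : INR 2 = 2 by rewrite /=; ring. ring.
have -> : INR 11 = 11 by rewrite /=; ring.
lra.
Qed.

Local Open Scope R_scope.
Unset Implicit Arguments. Set Strict Implicit.

Theorem mainTheorem10 (A : finType) (F : seq (seq A)) (f : (Z -> A) -> R)
  (P : R) (mu : seq A -> R) (h K alpha gamma gamma0 delta : R)
  (n0 : nat) (k : nat -> nat)
  (HX : nontrivialSFT F) (Hmix : topMixing F) (Hf : holderOn F f)
  (Hmu : invMeasureOn F mu) (HK1 : 1 < K)
  (Hgibbs : gibbsProp F f P mu K) (Hqb : quasiBernoulli F mu K)
  (Hh : isEntropy mu h)
  (Hg0 : isInf (gamma0Set F mu) gamma0)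
  (Halpha : gamma0 < alpha <= 1) (Hgamma : gamma0 < gamma < alpha)
  (Hn0 : forall u : seq A, inB F u -> (n0 <= size u)%N -> mu u <= gamma ^ size u)
  (Hdelta : 0 < delta < / 4 * ln (alpha / gamma))
  (Hk1 : Un_cv (fun n => INR n / INR (k n)) 0)
  (Hk2 : Un_cv (fun n => INR (k n) * ln (INR n) / (INR n ^ 2)) 0) :
  exists p4 : seq R, exists N : nat, forall n : nat, (N <= n)%N ->
    forall j : nat, (1 <= j)%N -> (j <= 2 * (k n - n + 1))%N ->
      muPair mu (k n) (Q_set F mu h delta n (k n) j)
        <= Rpower (peval p4 (INR n)) (INR (k n) / INR n)
           * exp (- 2 * INR n * (h - delta))
           * gamma ^ (2 * (k n - n + 1) - j).
Proof.
have Hg00 : 0 <= gamma0.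
  case: Hg0 => _ Hsup. apply: Hsup => g [Hgp _]; lra.
have Hg : 0 < gamma < 1 by lra.
case: HX => x [_ [_ _]]. set a0 := x 0%Z.
have [N1 HN1] := Hk1 (1/2) ltac:(lra).
have [N2 HN2] := Hk2 1 Rlt_0_1.
set c := (10 * K ^ 4 * (/ gamma) ^ (2 * n0 + 2)) ^ 11.
exists (nseq 33 0 ++ [:: c]), (maxn (maxn N1 N2) 3).
move=> n HN j Hj1 Hj2.
rewrite peval_mono.
have Hn3 : (3 <= n)%N by lia.
have HnR : 3 <= INR n by have := le_INR 3 n (leP Hn3); rewrite /=; lra.
have HRHS : 0 <= Rpower (INR n ^ 33 * c) (INR (k n) / INR n) * exp (- 2 * INR n * (h - delta)) * gamma ^ (2 * (k n - n + 1) - j).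
  apply: Rmult_le_pos; last (apply: pow_le; lra).
  apply: Rmult_le_pos; apply: Rlt_le; [rewrite /Rpower|]; apply: exp_pos.
case: (posnP (k n)) => Hk0.
- apply: Rle_trans HRHS. rewrite /muPair Hk0.
  rewrite (@sumR_eq _ _ _ (fun _ => 0)); first by rewrite sumR_const; lra.
  move=> u. rewrite (@sumR_eq _ _ _ (fun _ => 0)); first by rewrite sumR_const; lra.
  move=> v. rewrite ind_F; first lra.
  move=> [[Hu [_ [_ [_ [Hs _]]]]] _]. move: Hs. rewrite size_take_min Hu. lia.
- have H1 := HN1 n ltac:(apply/leP; lia). rewrite /R_dist Rminus_0_r in H1.
  have Hkp : 0 < INR (k n) by apply: lt_0_INR; apply/ltP.
  have Hnp : 0 < INR n by lra.
  have Hk2n : (2 * n < k n)%N.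
    have : INR n / INR (k n) < 1/2 by have := Rle_abs (INR n / INR (k n)); lra.
    move=> H. have : 2 * INR n < INR (k n).
      apply/(Rmult_lt_reg_r (/ INR (k n))); first exact: Rinv_0_lt_compat.
      rewrite Rinv_r; last lra. lra.
    have -> : 2 * INR n = INR (2 * n) by rewrite -multE mult_INR.
    move/INR_lt/ltP. done.
  have H2 := HN2 n ltac:(apply/leP; lia). rewrite /R_dist Rminus_0_r in H2.
  have Hln : 1 <= ln (INR n).
    case: (Rle_or_lt 1 (ln (INR n))) => // Hl.
    have := exp_increasing _ _ Hl. rewrite exp_ln //. have := exp_le_3. lra.
  have Hkn : (k n <= n * n)%N.
    have : INR (k n) * ln (INR n) / INR n ^ 2 < 1 by have := Rle_abs (INR (k n) * ln (INR n) / INR n ^ 2); lra.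
    move=> H. have : INR (k n) < INR (n * n).
      rewrite -multE mult_INR.
      have Hsq : 0 < INR n ^ 2 by apply: pow_lt.
      have : INR (k n) * ln (INR n) < INR n ^ 2.
        apply/(Rmult_lt_reg_r (/ INR n ^ 2)); first exact: Rinv_0_lt_compat.
        rewrite Rinv_r; last lra. lra.
      have : INR (k n) <= INR (k n) * ln (INR n) by nra.
      simpl. lra.
    move/INR_lt/ltP. lia.
  set m := ((k n) %/ n).+1.
  have Hm : (k n - n <= m * n)%N.
    rewrite /m mulSn. have := divn_eq (k n) n. have := ltn_pmod (k n) (ltac:(lia) : (0 < n)%N). lia.
  apply: Rle_trans (@PairBound _ a0 F mu K gamma n0 h delta n (k n) m j Hmu HK1 Hqb Hg Hn0 ltac:(lia) ltac:(lia) Hm) _.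
  apply: Rmult_le_compat_r; first (apply: pow_le; lra).
  apply: Rmult_le_compat_r; first (apply: Rlt_le; apply: exp_pos).
  exact: (@Numeric K gamma n0 n (k n) j HK1 Hg ltac:(lia) Hk2n Hkn Hj2).
Qed.
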